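(* Let $g(x,y)=\dfrac{\theta(2x)\theta(2y)}{h(x,y)}$. Then for all $x,y$ (where defined), \[ g(x,y)+g(x+\eta,y)+g(x+2\eta,y)=0 , \] and similarly $g(x,y)+g(x,y+\eta)+g(x,y+2\eta)=0$.
   Context: For $|q|<1$, $\theta_1(x;q)=2\sum_{n\ge0}(-1)^nq^{(n+1/2)^2}\sin((2n+1)x)$. Fix $p=e^{i\pi\tau}$ with $\operatorname{Im}\tau>0$, write $\theta(x)=\theta_1(x;p)$, set $\eta=\pi/3$, and $h(x,y)=\theta(\eta+x-y)\theta(\eta+x+y)\theta(\eta-x-y)\theta(\eta-x+y)$. *)

(* Defs.v *)
From Stdlib Require Import Reals ClassicalEpsilon.
Open Scope R_scope.

Definition CC : Type := (R * R)%type.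
Definition Cre (z : CC) : R := fst z.
Definition Cim (z : CC) : R := snd z.
Definition RtoC (r : R) : CC := (r, 0).
Definition C0 : CC := (0, 0).
Definition Cadd (z w : CC) : CC := (fst z + fst w, snd z + snd w).
Definition Cmul (z w : CC) : CC :=
  (fst z * fst w - snd z * snd w, fst z * snd w + snd z * fst w).
Definition Cscale (r : R) (z : CC) : CC := (r * fst z, r * snd z).
Definition Cinv (z : CC) : CC :=
  (fst z / (fst z ^ 2 + snd z ^ 2), - snd z / (fst z ^ 2 + snd z ^ 2)).
Definition Cdiv (z w : CC) : CC := Cmul z (Cinv w).

Definition Cexp (z : CC) : CC := (exp (fst z) * cos (snd z), exp (fst z) * sin (snd z)).
Definition Csin (z : CC) : CC :=
  (sin (fst z) * ((exp (snd z) + exp (- snd z)) / 2),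
   cos (fst z) * ((exp (snd z) - exp (- snd z)) / 2)).

Definition Ccv (u : nat -> CC) (l : CC) : Prop :=
  Un_cv (fun N => fst (u N)) (fst l) /\ Un_cv (fun N => snd (u N)) (snd l).

(* p = e^{i pi tau}; p^{s} := exp(i pi tau s) *)
Definition ppow (tau : CC) (s : R) : CC := Cexp (Cscale s (Cmul (0, PI) tau)).

Definition theta_term (tau x : CC) (n : nat) : CC :=
  Cscale (2 * (-1) ^ n)
    (Cmul (ppow tau ((INR n + / 2) ^ 2)) (Csin (Cscale (2 * INR n + 1) x))).

Fixpoint theta_psum (tau x : CC) (N : nat) : CC :=
  match N with
  | O => theta_term tau x 0
  | S M => Cadd (theta_psum tau x M) (theta_term tau x (S M))
  end.

Definition theta (tau x : CC) : CC :=
  epsilon (inhabits C0) (fun l => Ccv (theta_psum tau x) l).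

Definition eta : CC := RtoC (PI / 3).

Definition h (tau x y : CC) : CC :=
  Cmul (Cmul (theta tau (Cadd eta (Cadd x (Cscale (-1) y))))
             (theta tau (Cadd eta (Cadd x y))))
       (Cmul (theta tau (Cadd eta (Cadd (Cscale (-1) x) (Cscale (-1) y))))
             (theta tau (Cadd eta (Cadd (Cscale (-1) x) y)))).

Definition g (tau x y : CC) : CC :=
  Cdiv (Cmul (theta tau (Cscale 2 x)) (theta tau (Cscale 2 y))) (h tau x y).

(* Main.v *)
Require Import Defs.
From Stdlib Require Import Reals.
From Stdlib Require Import Lra Lia List ZArith Permutation ClassicalEpsilon.
From Coquelicot Require Import Coquelicot.
Open Scope R_scope.

Lemma Cpair_eq (a b c d : R) : a = c -> b = d -> (a, b) = (c, d).
Proof. intros; subst; auto. Qed.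

Definition E (w : C) : C := (exp (- snd w) * cos (fst w), exp (- snd w) * sin (fst w)).

Lemma E_add (a b : C) : E (Cplus a b) = Cmult (E a) (E b).
Proof.
  unfold E, Cplus, Cmult; simpl.
  rewrite Ropp_plus_distr, exp_plus, cos_plus, sin_plus.
  apply Cpair_eq; ring.
Qed.

Lemma E_real (t : R) : E (RtoC t) = (cos t, sin t).
Proof. unfold E, RtoC; simpl. rewrite Ropp_0, exp_0. apply Cpair_eq; ring. Qed.

Lemma Cmod_E (w : C) : Cmod (E w) = exp (- snd w).
Proof.
  unfold Cmod, E; cbn [fst snd].
  replace ((exp (- snd w) * cos (fst w)) ^ 2 + (exp (- snd w) * sin (fst w)) ^ 2)
    with (exp (- snd w) ^ 2) by (pose proof (sin2_cos2 (fst w)); unfold Rsqr in *; nra).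
  rewrite sqrt_pow2; auto. left; apply exp_pos.
Qed.

Lemma ppow_add (tau : CC) (s t : R) : ppow tau (s + t) = Cmult (ppow tau s) (ppow tau t).
Proof.
  unfold ppow, Cexp, Cscale, Cmult; cbn [fst snd].
  set (A := fst (Cmul (0, PI) tau)). set (B := snd (Cmul (0, PI) tau)).
  rewrite !Rmult_plus_distr_r, exp_plus, cos_plus, sin_plus.
  apply Cpair_eq; ring.
Qed.

Lemma Cmod_ppow (tau : CC) (s : R) : Cmod (ppow tau s) = exp (- (PI * snd tau) * s).
Proof.
  unfold Cmod, ppow, Cexp, Cscale, Cmult; cbn [fst snd].
  set (u := s * fst (Cmul (0, PI) tau)).
  set (v := s * snd (Cmul (0, PI) tau)).
  replace ((exp u * cos v) ^ 2 + (exp u * sin v) ^ 2)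
    with (exp u ^ 2) by (pose proof (sin2_cos2 v); unfold Rsqr in *; nra).
  rewrite sqrt_pow2 by (left; apply exp_pos).
  f_equal. unfold u, Cmul. cbn [fst snd]. ring.
Qed.

Lemma Csin_E (z : C) : Cscale 2 (Csin z) = Cmult (0, -1) (Cplus (E z) (Copp (E (Copp z)))).
Proof.
  unfold Cscale, Csin, Cmult, Cplus, Copp, E; simpl.
  rewrite Ropp_involutive, cos_neg, sin_neg.
  apply Cpair_eq; field.
Qed.

Definition sg (a : Z) : R := if Z.even a then 1 else -1.

Definition tz (tau z : C) (a : Z) : C :=
  Cmult (RtoC (sg a)) (Cmult (ppow tau ((IZR a + / 2) ^ 2)) (E (Cmult (RtoC (IZR (2 * a + 1))) z))).

Lemma Cscale_RtoC r z : Cscale r z = Cmult (RtoC r) z.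
Proof. unfold Cscale, Cmult, RtoC; cbn [fst snd]. apply Cpair_eq; ring. Qed.

Lemma Csin_E' (w : C) : Csin w = Cmult (0, -1/2) (Cplus (E w) (Copp (E (Copp w)))).
Proof.
  unfold Csin, Cmult, Cplus, Copp, E; cbn [fst snd].
  rewrite Ropp_involutive, cos_neg, sin_neg.
  apply Cpair_eq; field.
Qed.

Lemma sg_nat (n : nat) : sg (Z.of_nat n) = (-1) ^ n.
Proof.
  induction n. reflexivity.
  unfold sg in *. rewrite Nat2Z.inj_succ, Z.even_succ, <- Z.negb_even.
  destruct (Z.even (Z.of_nat n)); simpl; rewrite <- IHn; ring.
Qed.

Lemma sg_opp_succ (a : Z) : sg (- a - 1) = - sg a.
Proof.
  unfold sg. replace (- a - 1)%Z with (Z.pred (- a)) by lia.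
  rewrite Z.even_pred, Z.odd_opp, <- Z.negb_even.
  destruct (Z.even a); simpl; ring.
Qed.

Lemma term_tz tau z n :
  theta_term tau z n = Cmult (0, -1) (Cplus (tz tau z (Z.of_nat n)) (tz tau z (- Z.of_nat n - 1))).
Proof.
  unfold theta_term, tz.
  rewrite sg_opp_succ, sg_nat.
  rewrite !Cscale_RtoC, Csin_E'.
  replace (IZR (- Z.of_nat n - 1) + / 2) with (- (INR n + / 2))
    by (rewrite minus_IZR, opp_IZR, <- INR_IZR_INZ; field).
  replace (IZR (Z.of_nat n) + / 2) with (INR n + / 2) by (rewrite <- INR_IZR_INZ; field).
  replace ((- (INR n + / 2)) ^ 2) with ((INR n + / 2) ^ 2) by field.
  replace (Cmult (RtoC (IZR (2 * (- Z.of_nat n - 1) + 1))) z)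
    with (Copp (Cmult (RtoC (2 * INR n + 1)) z)).
  2:{ unfold Copp, Cmult, RtoC; cbn [fst snd].
      rewrite plus_IZR, mult_IZR, minus_IZR, opp_IZR, <- INR_IZR_INZ.
      apply Cpair_eq; ring. }
  replace (RtoC (IZR (2 * Z.of_nat n + 1))) with (RtoC (2 * INR n + 1)).
  2:{ rewrite plus_IZR, mult_IZR, <- INR_IZR_INZ. reflexivity. }
  set (P := ppow tau ((INR n + / 2) ^ 2)).
  set (w := Cmult (RtoC (2 * INR n + 1)) z).
  replace (0, -1/2) with (Cmult (RtoC (/2)) (0, -1)).
  2:{ unfold Cmult, RtoC; cbn [fst snd]. apply Cpair_eq; field. }
  rewrite !RtoC_mult, !RtoC_opp.
  replace (RtoC 2) with (Cplus (RtoC 1) (RtoC 1)).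
  2:{ unfold Cplus, RtoC; cbn [fst snd]. apply Cpair_eq; ring. }
  change Cmul with Cmult.
  rewrite RtoC_inv.
  replace (RtoC 2) with (Cplus (RtoC 1) (RtoC 1)).
  2:{ unfold Cplus, RtoC; cbn [fst snd]. apply Cpair_eq; ring. }
  match goal with |- ?a = ?b => change (@eq C a b) end. field.
  all: try lra.
  all: unfold Cplus, RtoC; cbn [fst snd]; intro H; injection H; lra.
Qed.

Definition lsum {A : Type} (f : A -> C) (l : list A) : C :=
  fold_right (fun x acc => Cplus (f x) acc) (RtoC 0) l.

Lemma lsum_app {A} (f : A -> C) l1 l2 : lsum f (l1 ++ l2) = Cplus (lsum f l1) (lsum f l2).
Proof.
  induction l1; simpl.
  - change (@eq C (lsum f l2) (0 + lsum f l2)%C). ring.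
  - rewrite IHl1. change (@eq C (f a + (lsum f l1 + lsum f l2)) (f a + lsum f l1 + lsum f l2))%C. ring.
Qed.

Lemma lsum_ext {A} (f g : A -> C) l : (forall x, In x l -> f x = g x) -> lsum f l = lsum g l.
Proof.
  induction l; simpl; intros H; auto.
  rewrite H by auto. rewrite IHl; auto.
Qed.

Lemma lsum_map {A B} (f : B -> C) (s : A -> B) l : lsum f (map s l) = lsum (fun x => f (s x)) l.
Proof. induction l; simpl; auto. rewrite IHl; auto. Qed.

Lemma lsum_mult_l {A} (c : C) (f : A -> C) l : Cmult c (lsum f l) = lsum (fun x => Cmult c (f x)) l.
Proof.
  induction l; simpl.
  - change (@eq C (c * 0) 0)%C. ring.
  - rewrite <- IHl. change (@eq C (c * (f a + lsum f l)) (c * f a + c * lsum f l))%C. ring.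
Qed.

Lemma lsum_plus {A} (f g : A -> C) l : lsum (fun x => Cplus (f x) (g x)) l = Cplus (lsum f l) (lsum g l).
Proof.
  induction l; simpl.
  - change (@eq C 0 (0 + 0))%C. ring.
  - rewrite IHl. change (@eq C (f a + g a + (lsum f l + lsum g l)) (f a + lsum f l + (g a + lsum g l)))%C. ring.
Qed.

Lemma lsum_prod {A B} (f : A -> C) (g : B -> C) l1 l2 :
  Cmult (lsum f l1) (lsum g l2) = lsum (fun p => Cmult (f (fst p)) (g (snd p))) (list_prod l1 l2).
Proof.
  induction l1; simpl.
  - change (@eq C (0 * lsum g l2) 0)%C. ring.
  - rewrite lsum_app, lsum_map, <- IHl1. simpl. rewrite <- lsum_mult_l.
    change (@eq C ((f a + lsum f l1) * lsum g l2) (f a * lsum g l2 + lsum f l1 * lsum g l2))%C. ring.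
Qed.

Lemma lsum_perm {A} (f : A -> C) l l' : Permutation l l' -> lsum f l = lsum f l'.
Proof.
  induction 1; simpl; auto.
  - rewrite IHPermutation; auto.
  - change (@eq C (f y + (f x + lsum f l)) (f x + (f y + lsum f l)))%C. ring.
  - congruence.
Qed.

Lemma lsum_filter {A} (f : A -> C) (p : A -> bool) l :
  lsum f l = Cplus (lsum f (filter p l)) (lsum f (filter (fun x => negb (p x)) l)).
Proof.
  induction l; simpl.
  - change (@eq C 0 (0 + 0))%C. ring.
  - destruct (p a); simpl; rewrite IHl.
    + change (@eq C (f a + (lsum f (filter p l) + lsum f (filter (fun x => negb (p x)) l)))
               (f a + lsum f (filter p l) + lsum f (filter (fun x => negb (p x)) l)))%C. ring.
    + change (@eq C (f a + (lsum f (filter p l) + lsum f (filter (fun x => negb (p x)) l)))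
               (lsum f (filter p l) + (f a + lsum f (filter (fun x => negb (p x)) l))))%C. ring.
Qed.

Lemma NoDup_list_prod {A B} (l1 : list A) (l2 : list B) :
  NoDup l1 -> NoDup l2 -> NoDup (list_prod l1 l2).
Proof.
  induction l1; simpl; intros H1 H2. constructor.
  inversion H1; subst.
  apply NoDup_app.
  - apply FinFun.Injective_map_NoDup; auto. intros x y E. injection E; auto.
  - auto.
  - intros [u v] Hin Hin2. apply in_map_iff in Hin. destruct Hin as [w [Ew _]].
    injection Ew; intros; subst. apply in_prod_iff in Hin2. tauto.
Qed.

Lemma pairing {A} (l : list A) (sig : A -> A) (f : A -> C) (inb : A -> bool) :
  NoDup l -> (forall x, In x l <-> inb x = true) -> (forall x, sig (sig x) = x) ->
  (forall x, f (sig x) = Copp (f x)) ->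
  lsum f (filter (fun x => inb (sig x)) l) = RtoC 0.
Proof.
  intros Hnd Hin Hinv Hf.
  set (L := filter (fun x => inb (sig x)) l).
  assert (HL : forall x, In x L <-> inb x = true /\ inb (sig x) = true).
  { intros x. unfold L. rewrite filter_In, Hin. tauto. }
  assert (Hnd' : NoDup (map sig L)).
  { apply FinFun.Injective_map_NoDup. intros x y E. rewrite <- (Hinv x), <- (Hinv y), E; auto.
    apply NoDup_filter; auto. }
  assert (Hincl : incl (map sig L) L).
  { intros x Hx. apply in_map_iff in Hx. destruct Hx as [y [Ey Hy]]. subst x.
    apply HL in Hy. apply HL. rewrite Hinv. tauto. }
  pose proof (lsum_perm f _ _ (Permutation_map_same_l sig Hnd' Hincl)) as P.
  rewrite lsum_map in P.
  rewrite (lsum_ext _ (fun x => Copp (f x))) in P by auto.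
  assert (lsum (fun x => Copp (f x)) L = Copp (lsum f L)).
  { clear. induction L; simpl. apply Cpair_eq; simpl; ring. rewrite IHL.
    change (@eq C (- f a + - lsum f L) (- (f a + lsum f L)))%C. ring. }
  rewrite H in P.
  destruct (lsum f L) as [u v]. unfold Copp in P; cbn [fst snd] in P. injection P; intros.
  apply Cpair_eq; lra.
Qed.

Lemma lsum_bound {A} (f : A -> C) l M :
  (forall x, In x l -> Cmod (f x) <= M) -> Cmod (lsum f l) <= INR (length l) * M.
Proof.
  induction l; intros H.
  - simpl. rewrite Cmod_0. lra.
  - change (length (a :: l)) with (S (length l)). rewrite S_INR.
    simpl. eapply Rle_trans. apply Cmod_triangle. specialize (IHl (fun x Hx => H x (or_intror Hx))).
    specialize (H a (or_introl eq_refl)). lra.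
Qed.

Fixpoint zl (N : nat) : list Z :=
  match N with
  | O => (0%Z :: (-1)%Z :: nil)
  | S M => zl M ++ (Z.of_nat (S M) :: (- Z.of_nat (S M) - 1)%Z :: nil)
  end.

Lemma zl_length N : length (zl N) = (2 * N + 2)%nat.
Proof. induction N; simpl; auto. rewrite length_app, IHN. simpl. lia. Qed.

Lemma zl_In N a : In a (zl N) <-> (- Z.of_nat N - 1 <= a <= Z.of_nat N)%Z.
Proof.
  induction N; simpl.
  - split. intros [H|[H|H]]; subst; try lia; contradiction.
    intros H. assert (a = 0 \/ a = -1)%Z as [->| ->] by lia; auto.
  - rewrite in_app_iff, IHN. simpl. split.
    + intros [H|[H|[H|H]]]; subst; try lia; contradiction.
    + intros H. assert (- Z.of_nat N - 1 <= a <= Z.of_nat N \/ Z.pos (Pos.of_succ_nat N) = a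
        \/ (- Z.pos (Pos.of_succ_nat N) - 1) = a)%Z by lia. tauto.
Qed.

Lemma zl_NoDup N : NoDup (zl N).
Proof.
  induction N; simpl.
  - constructor. simpl. lia. constructor; auto. constructor.
  - apply NoDup_app; auto.
    + constructor. simpl. lia. constructor; auto. constructor.
    + intros a Ha. apply zl_In in Ha. simpl. lia.
Qed.

Lemma psum_lsum tau z N : theta_psum tau z N = Cmult (0, -1) (lsum (tz tau z) (zl N)).
Proof.
  induction N.
  - simpl. rewrite term_tz. simpl.
    change (@eq C ((0, -1) * (tz tau z 0 + tz tau z (-1)))
                  ((0, -1) * (tz tau z 0 + (tz tau z (-1) + 0))))%C. f_equal. ring.
  - cbn [theta_psum zl]. rewrite IHN, term_tz, lsum_app. simpl.
    change (@eq C ((0, -1) * lsum (tz tau z) (zl N) +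
       (0, -1) * (tz tau z (Z.pos (Pos.of_succ_nat N)) + tz tau z (- Z.pos (Pos.of_succ_nat N) - 1)))
      ((0, -1) * (lsum (tz tau z) (zl N) + (tz tau z (Z.pos (Pos.of_succ_nat N)) +
        (tz tau z (- Z.pos (Pos.of_succ_nat N) - 1) + 0)))))%C. ring.
Qed.

Definition box (N : nat) : list ((Z * Z) * Z) := list_prod (list_prod (zl N) (zl N)) (zl N).

Lemma triple_prod (f g h : Z -> C) N :
  Cmult (Cmult (lsum f (zl N)) (lsum g (zl N))) (lsum h (zl N)) =
  lsum (fun q => Cmult (Cmult (f (fst (fst q))) (g (snd (fst q)))) (h (snd q))) (box N).
Proof. unfold box. rewrite !lsum_prod. apply lsum_ext. intros [[a b] c] _. reflexivity. Qed.

Lemma sg_add a b : sg (a + b) = sg a * sg b.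
Proof.
  unfold sg. rewrite Z.even_add.
  destruct (Z.even a), (Z.even b); simpl; ring.
Qed.

Lemma sg_odd a d : Z.odd d = true -> sg (a + d) = - sg a.
Proof.
  intros H. rewrite sg_add. unfold sg at 2. rewrite <- Z.negb_odd, H. simpl. ring.
Qed.

Lemma prod_closed tau x y t a b c :
  let u := Cplus x (RtoC t) in
  Cmult (Cmult (tz tau (Cmult (RtoC 2) u) a) (tz tau (Cplus u y) b)) (tz tau (Cplus u (Copp y)) c) =
  Cmult (RtoC (sg (a + b + c)))
   (Cmult (ppow tau ((IZR a + /2)^2 + (IZR b + /2)^2 + (IZR c + /2)^2))
    (Cmult (E (Cplus (Cmult (RtoC (2 * IZR (2*a+b+c+2))) x) (Cmult (RtoC (2 * IZR (b - c))) y)))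
           (E (RtoC (2 * IZR (2*a+b+c+2) * t))))).
Proof.
  intros u. unfold tz.
  rewrite !sg_add, !ppow_add.
  rewrite <- E_add.
  set (Ea := E (Cmult (RtoC (IZR (2 * a + 1))) (Cmult (RtoC 2) u))).
  set (Eb := E (Cmult (RtoC (IZR (2 * b + 1))) (Cplus u y))).
  set (Ec := E (Cmult (RtoC (IZR (2 * c + 1))) (Cplus u (Copp y)))).
  assert (HE : Cmult (Cmult Ea Eb) Ec = E (Cplus (Cplus (Cmult (RtoC (2 * IZR (2 * a + b + c + 2))) x)
      (Cmult (RtoC (2 * IZR (b - c))) y)) (RtoC (2 * IZR (2 * a + b + c + 2) * t)))).
  { unfold Ea, Eb, Ec. rewrite <- !E_add. f_equal. unfold u.
    rewrite !plus_IZR, !mult_IZR, !minus_IZR.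
    unfold Cplus, Cmult, Copp, RtoC; cbn [fst snd]. apply Cpair_eq; ring. }
  rewrite <- HE. rewrite !RtoC_mult.
  set (P1 := ppow tau ((IZR a + / 2) ^ 2)).
  set (P2 := ppow tau ((IZR b + / 2) ^ 2)).
  set (P3 := ppow tau ((IZR c + / 2) ^ 2)).
  match goal with |- ?l = ?r => change (@eq C l r) end. ring.
Qed.

Lemma cos_periodZ x n : cos (x + 2 * IZR n * PI) = cos x.
Proof.
  destruct (Z_le_gt_dec 0 n).
  - replace n with (Z.of_nat (Z.to_nat n)) by lia. rewrite <- INR_IZR_INZ. apply cos_period.
  - replace n with (- Z.of_nat (Z.to_nat (- n)))%Z by lia. rewrite opp_IZR, <- INR_IZR_INZ.
    rewrite <- (cos_period (x + 2 * - INR (Z.to_nat (- n)) * PI) (Z.to_nat (- n))). f_equal. ring.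
Qed.

Lemma sin_periodZ x n : sin (x + 2 * IZR n * PI) = sin x.
Proof.
  destruct (Z_le_gt_dec 0 n).
  - replace n with (Z.of_nat (Z.to_nat n)) by lia. rewrite <- INR_IZR_INZ. apply sin_period.
  - replace n with (- Z.of_nat (Z.to_nat (- n)))%Z by lia. rewrite opp_IZR, <- INR_IZR_INZ.
    rewrite <- (sin_period (x + 2 * - INR (Z.to_nat (- n)) * PI) (Z.to_nat (- n))). f_equal. ring.
Qed.

Definition S3 (m : Z) : C :=
  Cplus (Cplus (E (RtoC 0)) (E (RtoC (2 * IZR m * PI / 3)))) (E (RtoC (2 * (2 * IZR m * PI / 3)))).

Lemma c23 : cos (2 * PI / 3) = - (1/2).
Proof. replace (2 * PI / 3) with (PI - PI / 3) by field. rewrite Rtrigo_facts.cos_pi_minus, cos_PI3. ring. Qed.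
Lemma s23 : sin (2 * PI / 3) = sqrt 3 / 2.
Proof. replace (2 * PI / 3) with (PI - PI / 3) by field. rewrite sin_PI_x, sin_PI3. ring. Qed.
Lemma c43 : cos (4 * PI / 3) = - (1/2).
Proof. replace (4 * PI / 3) with (PI / 3 + PI) by field. rewrite neg_cos, cos_PI3. ring. Qed.
Lemma s43 : sin (4 * PI / 3) = - (sqrt 3 / 2).
Proof. replace (4 * PI / 3) with (PI / 3 + PI) by field. rewrite neg_sin, sin_PI3. ring. Qed.

Lemma S3_val m : S3 m = if (m mod 3 =? 0)%Z then RtoC 3 else RtoC 0.
Proof.
  unfold S3. rewrite !E_real. rewrite cos_0, sin_0.
  pose proof (Z.div_mod m 3 ltac:(lia)) as Hm.
  pose proof (Z.mod_pos_bound m 3 ltac:(lia)) as Hr.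
  set (j := (m / 3)%Z) in *. set (r := (m mod 3)%Z) in *.
  assert (Hm' : IZR m = 3 * IZR j + IZR r) by (rewrite Hm, plus_IZR, mult_IZR; reflexivity).
  replace (2 * IZR m * PI / 3) with (2 * IZR r * PI / 3 + 2 * IZR j * PI) by (rewrite Hm'; field).
  replace (2 * (2 * IZR r * PI / 3 + 2 * IZR j * PI)) with (4 * IZR r * PI / 3 + 2 * IZR (2 * j) * PI)
    by (rewrite mult_IZR; field).
  rewrite !cos_periodZ, !sin_periodZ.
  assert (r = 0 \/ r = 1 \/ r = 2)%Z as [Hr0|[Hr0|Hr0]] by lia; rewrite Hr0; simpl.
  - rewrite !Rmult_0_r, !Rmult_0_l, !Rdiv_0_l, cos_0, sin_0. unfold Cplus, RtoC; cbn [fst snd].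
    apply Cpair_eq; ring.
  - replace (2 * 1 * PI / 3) with (2 * PI / 3) by field.
    replace (4 * 1 * PI / 3) with (4 * PI / 3) by field.
    rewrite c23, s23, c43, s43. unfold Cplus, RtoC; cbn [fst snd]. apply Cpair_eq; field.
  - replace (2 * 2 * PI / 3) with (4 * PI / 3) by field.
    replace (4 * 2 * PI / 3) with (2 * PI / 3 + 2 * IZR 1 * PI) by field.
    rewrite cos_periodZ, sin_periodZ.
    rewrite c23, s23, c43, s43. unfold Cplus, RtoC; cbn [fst snd]. apply Cpair_eq; field.
Qed.

Definition mq (q : (Z * Z) * Z) : Z := (2 * fst (fst q) + snd (fst q) + snd q + 2)%Z.
Definition sigd (q : (Z * Z) * Z) : Z := (2 * fst (fst q) + 1 - 2 * (mq q / 3))%Z.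
Definition sig (q : (Z * Z) * Z) : (Z * Z) * Z :=
  ((fst (fst q) - sigd q, snd (fst q) + sigd q), snd q + sigd q)%Z.
Definition Qf (q : (Z * Z) * Z) : R :=
  (IZR (fst (fst q)) + /2)^2 + (IZR (snd (fst q)) + /2)^2 + (IZR (snd q) + /2)^2.
Definition Wq (x y : C) (q : (Z * Z) * Z) : C :=
  Cplus (Cmult (RtoC (2 * IZR (mq q))) x) (Cmult (RtoC (2 * IZR (snd (fst q) - snd q))) y).
Definition Gc (tau x y : C) (q : (Z * Z) * Z) : C :=
  Cmult (RtoC (sg (fst (fst q) + snd (fst q) + snd q)))
   (Cmult (ppow tau (Qf q)) (Cmult (E (Wq x y q)) (S3 (mq q)))).

Lemma mq_sig q : mq (sig q) = mq q.
Proof. destruct q as [[a b] c]. unfold sig, mq; cbn [fst snd]. lia. Qed.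

Lemma sigd_sig q : sigd (sig q) = (- sigd q)%Z.
Proof.
  pose proof (mq_sig q) as H. unfold sigd at 1. rewrite H.
  destruct q as [[a b] c]. unfold sig, sigd; cbn [fst snd]. lia.
Qed.

Lemma sig_inv q : sig (sig q) = q.
Proof.
  pose proof (sigd_sig q) as H.
  destruct q as [[a b] c]. unfold sig at 1. rewrite H. unfold sig; cbn [fst snd].
  f_equal; [f_equal|]; lia.
Qed.

Lemma Gc_sig tau x y q : Gc tau x y (sig q) = Copp (Gc tau x y q).
Proof.
  unfold Gc, Wq. rewrite mq_sig.
  assert (Hbc : (snd (fst (sig q)) - snd (sig q) = snd (fst q) - snd q)%Z).
  { destruct q as [[a b] c]; unfold sig; cbn [fst snd]; lia. }
  rewrite Hbc.
  assert (Hsg : sg (fst (fst (sig q)) + snd (fst (sig q)) + snd (sig q)) =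
                - sg (fst (fst q) + snd (fst q) + snd q)).
  { destruct q as [[a b] c]. unfold sig; cbn [fst snd].
    replace (a - sigd (a, b, c) + (b + sigd (a, b, c)) + (c + sigd (a, b, c)))%Z
      with (a + b + c + sigd (a, b, c))%Z by lia.
    apply sg_odd. unfold sigd; cbn [fst snd].
    replace (2 * a + 1 - 2 * (mq (a, b, c) / 3))%Z with (1 + 2 * (a - mq (a, b, c) / 3))%Z by lia.
    rewrite Z.odd_add_mul_2. reflexivity. }
  rewrite Hsg, S3_val.
  destruct (mq q mod 3 =? 0)%Z eqn:Hm.
  - assert (HQ : Qf (sig q) = Qf q).
    { apply Z.eqb_eq in Hm.
      pose proof (Z.div_mod (mq q) 3 ltac:(lia)) as Hd. rewrite Hm, Z.add_0_r in Hd.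
      destruct q as [[a b] c]. unfold Qf, sig, sigd; cbn [fst snd].
      set (j := (mq (a, b, c) / 3)%Z) in *.
      unfold mq in Hd; cbn [fst snd] in Hd.
      assert (HC : IZR c = 3 * IZR j - 2 * IZR a - IZR b - 2).
      { replace c with (3 * j - 2 * a - b - 2)%Z by lia.
        rewrite !minus_IZR, !mult_IZR. reflexivity. }
      rewrite HC. repeat (rewrite ?minus_IZR, ?plus_IZR, ?mult_IZR, ?opp_IZR). rewrite HC. field. }
    rewrite HQ. rewrite RtoC_opp.
    match goal with |- ?l = ?r => change (@eq C l r) end. ring.
  - rewrite RtoC_opp.
    match goal with |- ?l = ?r => change (@eq C l r) end.
    ring.
Qed.

Definition inr (N : nat) (e : Z) : bool := andb (- Z.of_nat N - 1 <=? e)%Z (e <=? Z.of_nat N)%Z.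
Definition inb (N : nat) (q : (Z * Z) * Z) : bool :=
  andb (andb (inr N (fst (fst q))) (inr N (snd (fst q)))) (inr N (snd q)).

Lemma inr_iff N e : inr N e = true <-> (- Z.of_nat N - 1 <= e <= Z.of_nat N)%Z.
Proof. unfold inr. rewrite Bool.andb_true_iff, !Z.leb_le. tauto. Qed.

Lemma box_In N q : In q (box N) <-> inb N q = true.
Proof.
  destruct q as [[a b] c]. unfold box, inb; cbn [fst snd].
  rewrite !in_prod_iff, !zl_In, !Bool.andb_true_iff, !inr_iff. tauto.
Qed.

Lemma box_NoDup N : NoDup (box N).
Proof. unfold box. repeat apply NoDup_list_prod; apply zl_NoDup. Qed.

Lemma box_length N : length (box N) = ((2 * N + 2) * (2 * N + 2) * (2 * N + 2))%nat.
Proof. unfold box. rewrite !length_prod, zl_length. reflexivity. Qed.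

Lemma sq_out N e : inr N e = false -> (INR N + 1 + /2) ^ 2 <= (IZR e + /2) ^ 2.
Proof.
  intros H. assert (~ (- Z.of_nat N - 1 <= e <= Z.of_nat N)%Z) as H'.
  { intros H2. apply inr_iff in H2. congruence. }
  assert (e >= Z.of_nat N + 1 \/ e <= - Z.of_nat N - 2)%Z as [H3|H3] by lia.
  - apply Z.ge_le in H3. apply IZR_le in H3. rewrite plus_IZR, <- INR_IZR_INZ in H3.
    pose proof (pos_INR N). nra.
  - apply IZR_le in H3. rewrite minus_IZR, opp_IZR, <- INR_IZR_INZ in H3.
    pose proof (pos_INR N). nra.
Qed.

Lemma sq_in N e : inr N e = true -> -(INR N + 1) <= IZR e <= INR N.
Proof.
  intros H. apply inr_iff in H. destruct H as [H1 H2].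
  apply IZR_le in H1. apply IZR_le in H2.
  rewrite minus_IZR, opp_IZR, <- INR_IZR_INZ in H1. rewrite <- INR_IZR_INZ in H2. lra.
Qed.

Lemma exp_mono x y : x <= y -> exp x <= exp y.
Proof. intros [H|H]. left; apply exp_increasing; auto. subst; lra. Qed.

Lemma Qf_sig q : (mq q mod 3 = 0)%Z -> Qf (sig q) = Qf q.
Proof.
  intros Hm.
  pose proof (Z.div_mod (mq q) 3 ltac:(lia)) as Hd. rewrite Hm, Z.add_0_r in Hd.
  destruct q as [[a b] c]. unfold Qf, sig, sigd; cbn [fst snd].
  set (j := (mq (a, b, c) / 3)%Z) in *.
  unfold mq in Hd; cbn [fst snd] in Hd.
  assert (HC : IZR c = 3 * IZR j - 2 * IZR a - IZR b - 2).
  { replace c with (3 * j - 2 * a - b - 2)%Z by lia.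
    rewrite !minus_IZR, !mult_IZR. reflexivity. }
  rewrite HC. repeat (rewrite ?minus_IZR, ?plus_IZR, ?mult_IZR, ?opp_IZR). rewrite HC. field.
Qed.

Lemma Rabs_sg a : Rabs (sg a) = 1.
Proof. unfold sg. destruct (Z.even a); [apply Rabs_R1|]. rewrite Rabs_left; lra. Qed.

Lemma Gc_bound tau x y N q : 0 < snd tau -> inb N q = true -> inb N (sig q) = false ->
  Cmod (Gc tau x y q) <=
  3 * exp (- (PI * snd tau) * (INR N + 1) ^ 2 + 8 * (Rabs (snd x) + Rabs (snd y)) * (INR N + 1)).
Proof.
  intros Htau Hin Hout.
  set (t := INR N + 1).
  assert (Ht : 0 <= t) by (unfold t; pose proof (pos_INR N); lra).
  unfold Gc. rewrite !Cmod_mult, Cmod_R, Rabs_sg, Cmod_ppow, Cmod_E, S3_val.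
  destruct (mq q mod 3 =? 0)%Z eqn:Hm.
  2:{ rewrite Cmod_R, Rabs_R0. rewrite !Rmult_0_r. pose proof (exp_pos
        (- (PI * snd tau) * t ^ 2 + 8 * (Rabs (snd x) + Rabs (snd y)) * t)). lra. }
  apply Z.eqb_eq in Hm.
  rewrite Cmod_R, Rabs_pos_eq by lra.
  assert (HQ : t ^ 2 <= Qf q).
  { rewrite <- (Qf_sig q Hm). unfold inb in Hout. unfold t.
    destruct (sig q) as [[a b] c]; cbn [fst snd] in *. unfold Qf; cbn [fst snd].
    pose proof (pow2_ge_0 (IZR a + /2)). pose proof (pow2_ge_0 (IZR b + /2)).
    pose proof (pow2_ge_0 (IZR c + /2)).
    assert ((INR N + 1) ^ 2 <= (INR N + 1 + /2) ^ 2) by (pose proof (pos_INR N); nra).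
    destruct (inr N a) eqn:Ea; destruct (inr N b) eqn:Eb; destruct (inr N c) eqn:Ec;
      simpl in Hout; try discriminate;
      first [ pose proof (sq_out N a Ea) | pose proof (sq_out N b Eb) | pose proof (sq_out N c Ec) ];
      lra. }
  assert (HW : - snd (Wq x y q) <= 8 * (Rabs (snd x) + Rabs (snd y)) * t).
  { unfold inb in Hin. destruct q as [[a b] c]; cbn [fst snd] in *.
    apply andb_prop in Hin as [Hin Hc]. apply andb_prop in Hin as [Ha Hb].
    apply sq_in in Ha. apply sq_in in Hb. apply sq_in in Hc. unfold t.
    unfold Wq, mq, Cplus, Cmult, RtoC; cbn [fst snd].
    rewrite !minus_IZR, !plus_IZR, !mult_IZR.
    set (m := 2 * IZR a + IZR b + IZR c + 2).
    assert (Hm1 : Rabs m <= 4 * (INR N + 1)) by (apply Rabs_le; unfold m; lra).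
    assert (Hm2 : Rabs (IZR b - IZR c) <= 4 * (INR N + 1)) by (apply Rabs_le; lra).
    pose proof (Rabs_pos (snd x)). pose proof (Rabs_pos (snd y)).
    assert (H1 : - (2 * m * snd x) <= 2 * (Rabs m * Rabs (snd x))).
    { rewrite <- Rabs_mult. pose proof (Rle_abs (- (m * snd x))). rewrite Rabs_Ropp in H1. lra. }
    assert (H2 : - (2 * (IZR b - IZR c) * snd y) <= 2 * (Rabs (IZR b - IZR c) * Rabs (snd y))).
    { rewrite <- Rabs_mult. pose proof (Rle_abs (- ((IZR b - IZR c) * snd y))). rewrite Rabs_Ropp in H2. lra. }
    assert (Rabs m * Rabs (snd x) <= 4 * (INR N + 1) * Rabs (snd x)) by (apply Rmult_le_compat_r; lra).
    assert (Rabs (IZR b - IZR c) * Rabs (snd y) <= 4 * (INR N + 1) * Rabs (snd y)) by (apply Rmult_le_compat_r; lra).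
    nra. }
  rewrite Rmult_1_l.
  assert (exp (- (PI * snd tau) * Qf q) <= exp (- (PI * snd tau) * t ^ 2)).
  { apply exp_mono. pose proof PI_RGT_0. assert (0 < PI * snd tau) by (apply Rmult_lt_0_compat; lra). apply Ropp_le_cancel. rewrite !Ropp_mult_distr_l, !Ropp_involutive. apply Rmult_le_compat_l; lra. }
  assert (exp (- snd (Wq x y q)) <= exp (8 * (Rabs (snd x) + Rabs (snd y)) * t)) by (apply exp_mono; auto).
  rewrite exp_plus.
  pose proof (exp_pos (- (PI * snd tau) * Qf q)). pose proof (exp_pos (- snd (Wq x y q))).
  pose proof (exp_pos (8 * (Rabs (snd x) + Rabs (snd y)) * t)).
  nra.
Qed.

Definition pk (tau x y : C) (N : nat) (t : R) : C :=
  let u := Cplus x (RtoC t) in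
  Cmult (Cmult (theta_psum tau (Cmult (RtoC 2) u) N) (theta_psum tau (Cplus u y) N))
        (theta_psum tau (Cplus u (Copp y)) N).

Definition FN (tau x y : C) (N : nat) : C :=
  Cplus (Cplus (pk tau x y N 0) (pk tau x y N (PI / 3))) (pk tau x y N (2 * (PI / 3))).

Definition prq (tau x y : C) (t : R) (q : (Z * Z) * Z) : C :=
  let u := Cplus x (RtoC t) in
  Cmult (Cmult (tz tau (Cmult (RtoC 2) u) (fst (fst q))) (tz tau (Cplus u y) (snd (fst q))))
        (tz tau (Cplus u (Copp y)) (snd q)).

Definition mi3 : C := Cmult (Cmult (0, -1) (0, -1)) (0, -1).

Lemma pk_lsum tau x y N t : pk tau x y N t = Cmult mi3 (lsum (prq tau x y t) (box N)).
Proof.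
  unfold pk, prq, mi3. rewrite !psum_lsum.
  set (A := lsum (tz tau (Cmult (RtoC 2) (Cplus x (RtoC t)))) (zl N)).
  set (B := lsum (tz tau (Cplus (Cplus x (RtoC t)) y)) (zl N)).
  set (D := lsum (tz tau (Cplus (Cplus x (RtoC t)) (Copp y))) (zl N)).
  transitivity (Cmult (Cmult (Cmult (0, -1) (0, -1)) (0, -1)) (Cmult (Cmult A B) D)).
  { match goal with |- ?l = ?r => change (@eq C l r) end. ring. }
  f_equal. unfold A, B, D. apply triple_prod.
Qed.

Lemma FN_Gc tau x y N : FN tau x y N = Cmult mi3 (lsum (Gc tau x y) (box N)).
Proof.
  unfold FN. rewrite !pk_lsum.
  rewrite <- !Cmult_plus_distr_l. f_equal.
  rewrite <- !lsum_plus. apply lsum_ext. intros [[a b] c] _.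
  unfold prq. rewrite !prod_closed. unfold Gc, Wq, mq, S3, Qf; cbn [fst snd].
  replace (2 * IZR (2 * a + b + c + 2) * 0) with 0 by ring.
  replace (2 * IZR (2 * a + b + c + 2) * (PI / 3)) with (2 * IZR (2 * a + b + c + 2) * PI / 3) by field.
  replace (2 * IZR (2 * a + b + c + 2) * (2 * (PI / 3))) with (2 * (2 * IZR (2 * a + b + c + 2) * PI / 3)) by field.
  match goal with |- ?l = ?r => change (@eq C l r) end. ring.
Qed.

Lemma Cmod_mi3 : Cmod mi3 = 1.
Proof.
  unfold mi3. rewrite !Cmod_mult.
  assert (Cmod (0, -1) = 1). { unfold Cmod; cbn [fst snd]. replace (0 ^ 2 + (-1) ^ 2) with 1 by ring. apply sqrt_1. }
  rewrite H. ring.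
Qed.

Lemma FN_bound tau x y N : 0 < snd tau ->
  Cmod (FN tau x y N) <= INR ((2 * N + 2) * (2 * N + 2) * (2 * N + 2)) *
   (3 * exp (- (PI * snd tau) * (INR N + 1) ^ 2 + 8 * (Rabs (snd x) + Rabs (snd y)) * (INR N + 1))).
Proof.
  intros Htau. rewrite FN_Gc, Cmod_mult, Cmod_mi3, Rmult_1_l.
  rewrite (lsum_filter _ (fun q => inb N (sig q))).
  rewrite (pairing (box N) sig (Gc tau x y) (inb N) (box_NoDup N) (box_In N) sig_inv (Gc_sig tau x y)).
  replace (Cplus (RtoC 0) (lsum (Gc tau x y) (filter (fun x0 => negb (inb N (sig x0))) (box N))))
    with (lsum (Gc tau x y) (filter (fun x0 => negb (inb N (sig x0))) (box N))).
  2:{ match goal with |- ?l = ?r => change (@eq C l r) end. ring. }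
  eapply Rle_trans. apply lsum_bound.
  { intros q Hq. apply filter_In in Hq. destruct Hq as [Hq1 Hq2].
    apply Gc_bound; auto. apply (proj1 (box_In N q)); auto. destruct (inb N (sig q)); auto; discriminate. }
  apply Rmult_le_compat_r.
  { pose proof (exp_pos (- (PI * snd tau) * (INR N + 1) ^ 2 + 8 * (Rabs (snd x) + Rabs (snd y)) * (INR N + 1))). lra. }
  apply le_INR. rewrite <- box_length. apply filter_length_le.
Qed.

Lemma quad_bound (al B s : R) : 0 < al -> - al * s ^ 2 + B * s <= B ^ 2 / (4 * al).
Proof.
  intros H. assert (0 <= (2 * al * s - B) ^ 2 / (4 * al)).
  { apply Rdiv_le_0_compat. apply pow2_ge_0. lra. }
  replace (B ^ 2 / (4 * al)) with ((- al * s ^ 2 + B * s) + (2 * al * s - B) ^ 2 / (4 * al)) by (field; lra).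
  lra.
Qed.

Lemma exp_nat n : exp (- INR n) = exp (-1) ^ n.
Proof.
  induction n. simpl. rewrite Ropp_0; apply exp_0.
  rewrite S_INR, <- tech_pow_Rmult, <- IHn, <- exp_plus. f_equal. ring.
Qed.

Lemma Cmod_Csin w : Cmod (Csin w) <= exp (Rabs (snd w)).
Proof.
  rewrite Csin_E', Cmod_mult.
  assert (Cmod (0, -1/2) = 1/2).
  { unfold Cmod; cbn [fst snd]. replace (0 ^ 2 + (-1/2) ^ 2) with ((1/2)^2) by field.
    apply sqrt_pow2. lra. }
  rewrite H. eapply Rle_trans. apply Rmult_le_compat_l. lra. apply Cmod_triangle.
  rewrite Cmod_opp, !Cmod_E. unfold Copp; cbn [snd]. rewrite Ropp_involutive.
  assert (exp (- snd w) <= exp (Rabs (snd w))) by (apply exp_mono; pose proof (Rle_abs (- snd w)); rewrite Rabs_Ropp in H0; lra).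
  assert (exp (snd w) <= exp (Rabs (snd w))) by (apply exp_mono; apply Rle_abs).
  lra.
Qed.

Lemma term_bound tau z n : 0 < snd tau ->
  Cmod (theta_term tau z n) <=
  2 * exp (- (PI * snd tau) * (INR n + /2) ^ 2 + (2 * INR n + 1) * Rabs (snd z)).
Proof.
  intros Ht. unfold theta_term. rewrite !Cscale_RtoC. change Cmul with Cmult. rewrite !Cmod_mult, Cmod_R.
  rewrite Cmod_ppow.
  rewrite Rabs_mult, pow_1_abs, (Rabs_pos_eq 2) by lra.
  rewrite exp_plus.
  pose proof (Cmod_Csin (Cmult (RtoC (2 * INR n + 1)) z)) as H.
  replace (snd (Cmult (RtoC (2 * INR n + 1)) z)) with ((2 * INR n + 1) * snd z) in H
    by (unfold Cmult, RtoC; cbn [fst snd]; ring).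
  rewrite Rabs_mult, (Rabs_pos_eq (2 * INR n + 1)) in H by (pose proof (pos_INR n); lra).
  pose proof (exp_pos (- (PI * snd tau) * (INR n + / 2) ^ 2)).
  apply Rmult_le_compat_l with (r := 2 * 1 * exp (- (PI * snd tau) * (INR n + / 2) ^ 2)) in H.
  2:{ lra. }
  lra.
Qed.

Lemma term_geom tau z : 0 < snd tau -> exists K, forall n,
  Cmod (theta_term tau z n) <= K * exp (-1) ^ n.
Proof.
  intros Ht.
  set (al := PI * snd tau). set (B := 2 * Rabs (snd z) + 1).
  assert (Hal : 0 < al) by (unfold al; pose proof PI_RGT_0; apply Rmult_lt_0_compat; lra).
  exists (2 * exp (B ^ 2 / (4 * al) + Rabs (snd z) + 1)).
  intros n. eapply Rle_trans. apply term_bound; auto. fold al.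
  rewrite <- exp_nat. rewrite Rmult_assoc, <- exp_plus.
  apply Rmult_le_compat_l. lra. apply exp_mono.
  pose proof (quad_bound al B (INR n + /2) Hal). unfold B in *.
  pose proof (Rabs_pos (snd z)). nra.
Qed.

Lemma psum_sum_fst tau z N : sum_n (fun n => fst (theta_term tau z n)) N = fst (theta_psum tau z N).
Proof.
  induction N. rewrite sum_O. reflexivity.
  rewrite sum_Sn, IHN. reflexivity.
Qed.
Lemma psum_sum_snd tau z N : sum_n (fun n => snd (theta_term tau z n)) N = snd (theta_psum tau z N).
Proof.
  induction N. rewrite sum_O. reflexivity.
  rewrite sum_Sn, IHN. reflexivity.
Qed.

Lemma comp_ex (a : nat -> R) K : (forall n, Rabs (a n) <= K * exp (-1) ^ n) ->
  exists l, Un_cv (sum_n a) l.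
Proof.
  intros H.
  assert (ex_series a).
  { apply (ex_series_le a (fun n => scal K (exp (-1) ^ n))).
    - intros n. apply H.
    - apply (@ex_series_scal_l R_AbsRing R_NormedModule K (fun n => exp (-1) ^ n)). apply ex_series_geom.
      rewrite Rabs_pos_eq by (left; apply exp_pos).
      rewrite <- exp_0. apply exp_increasing. lra. }
  destruct H0 as [l Hl]. exists l. apply is_lim_seq_Reals. exact Hl.
Qed.

Lemma theta_cv tau z : 0 < snd tau -> Ccv (theta_psum tau z) (theta tau z).
Proof.
  intros Ht. unfold theta. apply epsilon_spec.
  destruct (term_geom tau z Ht) as [K HK].
  destruct (comp_ex (fun n => fst (theta_term tau z n)) K) as [l1 H1].
  { intros n. eapply Rle_trans. 2: apply HK. eapply Rle_trans. 2: apply Rmax_Cmod. apply Rmax_l. }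
  destruct (comp_ex (fun n => snd (theta_term tau z n)) K) as [l2 H2].
  { intros n. eapply Rle_trans. 2: apply HK. eapply Rle_trans. 2: apply Rmax_Cmod. apply Rmax_r. }
  exists (l1, l2). split; cbn [fst].
  - intros e He. destruct (H1 e He) as [N HN]. exists N. intros n Hn. rewrite <- psum_sum_fst. apply HN; auto.
  - intros e He. destruct (H2 e He) as [N HN]. exists N. intros n Hn. rewrite <- psum_sum_snd. apply HN; auto.
Qed.

Lemma Ccv_mult u v l m : Ccv u l -> Ccv v m -> Ccv (fun N => Cmult (u N) (v N)) (Cmult l m).
Proof.
  intros [H1 H2] [H3 H4]. unfold Ccv, Cmult; cbn [fst snd]. split.
  - apply CV_minus; apply CV_mult; auto.
  - apply CV_plus; apply CV_mult; auto.
Qed.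

Lemma Ccv_plus u v l m : Ccv u l -> Ccv v m -> Ccv (fun N => Cplus (u N) (v N)) (Cplus l m).
Proof.
  intros [H1 H2] [H3 H4]. unfold Ccv, Cplus; cbn [fst snd]. split; apply CV_plus; auto.
Qed.

Lemma Ccv_unique u l m : Ccv u l -> Ccv u m -> l = m.
Proof.
  intros [H1 H2] [H3 H4]. destruct l, m. cbn [fst snd] in *. f_equal; eapply UL_sequence; eauto.
Qed.

Lemma Ccv_zero u : Un_cv (fun N => Cmod (u N)) 0 -> Ccv u (RtoC 0).
Proof.
  intros H. split; cbn [fst snd]; intros e He; destruct (H e He) as [N HN]; exists N; intros n Hn;
  specialize (HN n Hn); unfold R_dist in *; rewrite Rminus_0_r in *;
  rewrite Rabs_pos_eq in HN by apply Cmod_ge_0;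
  eapply Rle_lt_trans; try exact HN; pose proof (Rmax_Cmod (u n));
  pose proof (Rmax_l (Rabs (fst (u n))) (Rabs (snd (u n))));
  pose proof (Rmax_r (Rabs (fst (u n))) (Rabs (snd (u n)))); lra.
Qed.

Lemma big_bound (al be : R) (N : nat) : 0 < al ->
  INR ((2 * N + 2) * (2 * N + 2) * (2 * N + 2)) * (3 * exp (- al * (INR N + 1) ^ 2 + be * (INR N + 1)))
  <= 24 * exp ((be + 4) ^ 2 / (4 * al)) / (INR N + 1).
Proof.
  intros Hal. set (t := INR N + 1).
  assert (Ht : 1 <= t) by (unfold t; pose proof (pos_INR N); lra).
  replace (INR ((2 * N + 2) * (2 * N + 2) * (2 * N + 2))) with ((2 * t) ^ 3).
  2:{ rewrite !mult_INR, !plus_INR, !mult_INR. unfold t. change (INR 2) with (1 + 1). ring. }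
  set (Ec := exp ((be + 4) ^ 2 / (4 * al))).
  assert (H1 : exp (- al * t ^ 2 + be * t) <= Ec * / (exp t ^ 4)).
  { replace (/ exp t ^ 4) with (exp (- 4 * t)).
    2:{ assert (HH : exp (- 4 * t) * exp t ^ 4 = 1).
        { simpl. rewrite Rmult_1_r, <- !exp_plus. replace (- 4 * t + (t + (t + (t + t)))) with 0 by ring.
          apply exp_0. }
        assert (0 < exp t ^ 4) by (apply pow_lt, exp_pos).
        apply (Rmult_eq_reg_r (exp t ^ 4)); [|lra]. rewrite HH, Rinv_l; lra. }
    unfold Ec. rewrite <- exp_plus. apply exp_mono.
    pose proof (quad_bound al (be + 4) t Hal). lra. }
  assert (HX : t <= exp t) by (pose proof (exp_ineq1 t); lra).
  assert (HX4 : t ^ 4 <= exp t ^ 4) by (apply pow_incr; lra).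
  assert (Hpos : 0 < exp t ^ 4) by (apply pow_lt, exp_pos).
  assert (HEc : 0 < Ec) by apply exp_pos.
  apply Rle_trans with ((2 * t) ^ 3 * (3 * (Ec * / exp t ^ 4))).
  { apply Rmult_le_compat_l. apply pow_le; lra. lra. }
  replace ((2 * t) ^ 3 * (3 * (Ec * / exp t ^ 4))) with (24 * Ec / t * (t ^ 4 / exp t ^ 4))
    by (field; split; lra).
  assert (t ^ 4 / exp t ^ 4 <= 1).
  { apply Rmult_le_reg_r with (exp t ^ 4); auto. unfold Rdiv. rewrite Rmult_assoc, Rinv_l by lra. lra. }
  assert (0 <= 24 * Ec / t) by (apply Rdiv_le_0_compat; lra).
  nra.
Qed.

Lemma FN_to0 tau x y : 0 < snd tau -> Un_cv (fun N => Cmod (FN tau x y N)) 0.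
Proof.
  intros Ht. set (al := PI * snd tau). set (be := 8 * (Rabs (snd x) + Rabs (snd y))).
  assert (Hal : 0 < al) by (unfold al; pose proof PI_RGT_0; apply Rmult_lt_0_compat; lra).
  set (Kc := 24 * exp ((be + 4) ^ 2 / (4 * al))).
  assert (HK : 0 < Kc) by (unfold Kc; pose proof (exp_pos ((be + 4) ^ 2 / (4 * al))); lra).
  intros e He. destruct (INR_unbounded (Kc / e)) as [N0 HN0]. exists N0.
  intros n Hn. unfold R_dist. rewrite Rminus_0_r, Rabs_pos_eq by apply Cmod_ge_0.
  eapply Rle_lt_trans. apply FN_bound; auto. fold al be.
  eapply Rle_lt_trans. apply big_bound; auto. fold Kc.
  apply le_INR in Hn.
  assert (Kc / e < INR n + 1) by lra.
  assert (0 < INR n + 1) by (pose proof (pos_INR n); lra).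
  apply Rmult_lt_reg_r with (INR n + 1); auto. unfold Rdiv. rewrite Rmult_assoc, Rinv_l by lra.
  apply Rmult_lt_reg_r with (/ e). apply Rinv_0_lt_compat; auto.
  rewrite Rmult_1_r. replace (e * (INR n + 1) * / e) with (INR n + 1) by (field; lra). lra.
Qed.

Definition Tt (tau x y : C) (t : R) : C :=
  let u := Cplus x (RtoC t) in
  Cmult (Cmult (theta tau (Cmult (RtoC 2) u)) (theta tau (Cplus u y))) (theta tau (Cplus u (Copp y))).

Lemma F_zero tau x y : 0 < snd tau ->
  Cplus (Cplus (Tt tau x y 0) (Tt tau x y (PI / 3))) (Tt tau x y (2 * (PI / 3))) = RtoC 0.
Proof.
  intros Ht.
  assert (Hcv : Ccv (FN tau x y) (Cplus (Cplus (Tt tau x y 0) (Tt tau x y (PI / 3))) (Tt tau x y (2 * (PI / 3))))).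
  { unfold FN, pk, Tt. repeat apply Ccv_plus; repeat apply Ccv_mult; apply theta_cv; auto. }
  eapply Ccv_unique. exact Hcv. apply Ccv_zero. apply FN_to0; auto.
Qed.

Lemma Ccv_opp u l : Ccv u l -> Ccv (fun N => Copp (u N)) (Copp l).
Proof.
  intros [H1 H2]. unfold Ccv, Copp; cbn [fst snd]. split.
  - intros e He. destruct (H1 e He) as [N HN]. exists N. intros n Hn. specialize (HN n Hn).
    unfold R_dist in *. replace (- fst (u n) - - fst l) with (- (fst (u n) - fst l)) by ring.
    rewrite Rabs_Ropp. auto.
  - intros e He. destruct (H2 e He) as [N HN]. exists N. intros n Hn. specialize (HN n Hn).
    unfold R_dist in *. replace (- snd (u n) - - snd l) with (- (snd (u n) - snd l)) by ring.
    rewrite Rabs_Ropp. auto.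
Qed.

Lemma term_pi tau z n : theta_term tau (Cplus z (RtoC PI)) n = Copp (theta_term tau z n).
Proof.
  unfold theta_term, Csin, Cscale, Cmul, Cplus, Copp, RtoC; cbn [fst snd].
  replace ((2 * INR n + 1) * (fst z + PI)) with ((2 * INR n + 1) * fst z + 2 * INR n * PI + PI) by ring.
  replace ((2 * INR n + 1) * (snd z + 0)) with ((2 * INR n + 1) * snd z) by ring.
  rewrite neg_sin, neg_cos, sin_period, cos_period.
  apply Cpair_eq; ring.
Qed.

Lemma term_neg tau z n : theta_term tau (Copp z) n = Copp (theta_term tau z n).
Proof.
  unfold theta_term, Csin, Cscale, Cmul, Copp; cbn [fst snd].
  replace ((2 * INR n + 1) * - fst z) with (- ((2 * INR n + 1) * fst z)) by ring.
  replace ((2 * INR n + 1) * - snd z) with (- ((2 * INR n + 1) * snd z)) by ring.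
  rewrite sin_neg, cos_neg, Ropp_involutive.
  apply Cpair_eq; field.
Qed.

Lemma th_pi tau z : 0 < snd tau -> theta tau (Cplus z (RtoC PI)) = Copp (theta tau z).
Proof.
  intros Ht. eapply Ccv_unique. apply theta_cv; auto.
  assert (Ccv (fun N => Copp (theta_psum tau z N)) (Copp (theta tau z))) by (apply Ccv_opp, theta_cv; auto).
  destruct H as [H1 H2]. split.
  - intros e He. destruct (H1 e He) as [N HN]. exists N. intros n Hn.
    replace (fst (theta_psum tau (Cplus z (RtoC PI)) n)) with (fst (Copp (theta_psum tau z n))). auto.
    f_equal. clear. induction n; cbn [theta_psum]; [rewrite term_pi; reflexivity|].
    rewrite <- IHn, term_pi. generalize (theta_psum tau z n) (theta_term tau z (S n)). intros [a b] [c d].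
    unfold Cadd, Copp; cbn [fst snd]; apply Cpair_eq; ring.
  - intros e He. destruct (H2 e He) as [N HN]. exists N. intros n Hn.
    replace (snd (theta_psum tau (Cplus z (RtoC PI)) n)) with (snd (Copp (theta_psum tau z n))). auto.
    f_equal. clear. induction n; cbn [theta_psum]; [rewrite term_pi; reflexivity|].
    rewrite <- IHn, term_pi. generalize (theta_psum tau z n) (theta_term tau z (S n)). intros [a b] [c d].
    unfold Cadd, Copp; cbn [fst snd]; apply Cpair_eq; ring.
Qed.

Lemma th_neg tau z : 0 < snd tau -> theta tau (Copp z) = Copp (theta tau z).
Proof.
  intros Ht. eapply Ccv_unique. apply theta_cv; auto.
  assert (Ccv (fun N => Copp (theta_psum tau z N)) (Copp (theta tau z))) by (apply Ccv_opp, theta_cv; auto).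
  destruct H as [H1 H2]. split.
  - intros e He. destruct (H1 e He) as [N HN]. exists N. intros n Hn.
    replace (fst (theta_psum tau (Copp z) n)) with (fst (Copp (theta_psum tau z n))). auto.
    f_equal. clear. induction n; cbn [theta_psum]; [rewrite term_neg; reflexivity|].
    rewrite <- IHn, term_neg. generalize (theta_psum tau z n) (theta_term tau z (S n)). intros [a b] [c d].
    unfold Cadd, Copp; cbn [fst snd]; apply Cpair_eq; ring.
  - intros e He. destruct (H2 e He) as [N HN]. exists N. intros n Hn.
    replace (snd (theta_psum tau (Copp z) n)) with (snd (Copp (theta_psum tau z n))). auto.
    f_equal. clear. induction n; cbn [theta_psum]; [rewrite term_neg; reflexivity|].
    rewrite <- IHn, term_neg. generalize (theta_psum tau z n) (theta_term tau z (S n)). intros [a b] [c d].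
    unfold Cadd, Copp; cbn [fst snd]; apply Cpair_eq; ring.
Qed.

Ltac peq := unfold eta, Defs.RtoC, RtoC, Cadd, Cscale, Cplus, Copp, Cmult; cbn [fst snd]; apply Cpair_eq; lra.

Lemma th_same tau z w : z = w -> theta tau z = theta tau w.
Proof. intros; subst; auto. Qed.
Lemma th_shift tau z w : 0 < snd tau -> z = Cplus w (RtoC PI) -> theta tau z = Copp (theta tau w).
Proof. intros Ht ->. apply th_pi; auto. Qed.
Lemma th_negate tau z w : 0 < snd tau -> z = Copp w -> theta tau z = Copp (theta tau w).
Proof. intros Ht ->. apply th_neg; auto. Qed.
Lemma th_reflect tau z w : 0 < snd tau -> z = Cplus (Copp w) (RtoC PI) -> theta tau z = theta tau w.
Proof.
  intros Ht ->. rewrite th_pi, th_neg by auto.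
  destruct (theta tau w). unfold Copp; cbn [fst snd]. apply Cpair_eq; ring.
Qed.

Lemma Cmult_neq0 (a b : C) : Cmult a b <> RtoC 0 -> a <> RtoC 0 /\ b <> RtoC 0.
Proof.
  intros H. split; intros E; apply H; rewrite E;
  match goal with |- ?l = ?r => change (@eq C l r) end; ring.
Qed.

Lemma Copp_neq0 (a : C) : Copp a <> RtoC 0 -> a <> RtoC 0.
Proof. intros H E. apply H. rewrite E. apply Cpair_eq; cbn; ring. Qed.

Lemma part1 (tau : CC) (Htau : 0 < Cim tau) (x y : CC) :
     h tau x y <> C0 ->
     h tau (Cadd x eta) y <> C0 ->
     h tau (Cadd x (Cscale 2 eta)) y <> C0 ->
     Cadd (Cadd (g tau x y) (g tau (Cadd x eta) y))
          (g tau (Cadd x (Cscale 2 eta)) y) = C0.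
Proof.
  unfold Cim in Htau. intros H1 H2 H3.
  set (A := fun t => theta tau (Cplus (Cplus x (RtoC t)) y)).
  set (B := fun t => theta tau (Cplus (Cplus x (RtoC t)) (Copp y))).
  set (T := fun t => theta tau (Cmult (RtoC 2) (Cplus x (RtoC t)))).
  pose proof (F_zero tau x y Htau) as HF. unfold Tt in HF. fold (A 0) (A (PI/3)) (A (2*(PI/3))) in HF.
  fold (B 0) (B (PI/3)) (B (2*(PI/3))) (T 0) (T (PI/3)) (T (2*(PI/3))) in HF.
  assert (h0 : h tau x y = Cmult (Cmult (B (PI/3)) (A (PI/3))) (Cmult (A (2*(PI/3))) (B (2*(PI/3))))).
  { unfold h, A, B. change Cmul with Cmult. f_equal; f_equal.
    - apply th_same. peq.
    - apply th_same. peq.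
    - apply th_reflect; auto. peq.
    - apply th_reflect; auto. peq. }
  assert (h1 : h tau (Cadd x eta) y =
     Cmult (Cmult (B (2*(PI/3))) (A (2*(PI/3)))) (Cmult (Copp (A 0)) (Copp (B 0)))).
  { unfold h, A, B. change Cmul with Cmult. f_equal; f_equal.
    - apply th_same. peq.
    - apply th_same. peq.
    - apply th_negate; auto. peq.
    - apply th_negate; auto. peq. }
  assert (h2 : h tau (Cadd x (Cscale 2 eta)) y =
     Cmult (Cmult (Copp (B 0)) (Copp (A 0))) (Cmult (Copp (A (PI/3))) (Copp (B (PI/3))))).
  { unfold h, A, B. change Cmul with Cmult. f_equal; f_equal.
    - apply th_shift; auto. peq.
    - apply th_shift; auto. peq.
    - apply th_negate; auto. peq.
    - apply th_negate; auto. peq. }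
  assert (n0 : theta tau (Cscale 2 x) = T 0) by (apply th_same; peq).
  assert (n1 : theta tau (Cscale 2 (Cadd x eta)) = T (PI/3)) by (apply th_same; peq).
  assert (n2 : theta tau (Cscale 2 (Cadd x (Cscale 2 eta))) = T (2*(PI/3))) by (apply th_same; peq).
  rewrite h0 in H1. rewrite h1 in H2. rewrite h2 in H3.
  change C0 with (RtoC 0) in *.
  apply Cmult_neq0 in H1 as [H1a H1b]. apply Cmult_neq0 in H1a as [HB1 HA1].
  apply Cmult_neq0 in H1b as [HA2 HB2].
  apply Cmult_neq0 in H2 as [_ H2b]. apply Cmult_neq0 in H2b as [HA0 HB0].
  apply Copp_neq0 in HA0. apply Copp_neq0 in HB0.
  unfold g. rewrite h0, h1, h2, n0, n1, n2.
  change Defs.Cdiv with Coquelicot.Complex.Cdiv. change Cmul with Cmult. change Cadd with Cplus.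
  set (Y := theta tau (Cscale 2 y)).
  set (a0 := A 0) in *. set (a1 := A (PI/3)) in *. set (a2 := A (2*(PI/3))) in *.
  set (b0 := B 0) in *. set (b1 := B (PI/3)) in *. set (b2 := B (2*(PI/3))) in *.
  set (t0 := T 0) in *. set (t1 := T (PI/3)) in *. set (t2 := T (2*(PI/3))) in *.
  transitivity (Cmult (Cdiv Y (Cmult (Cmult (Cmult a0 a1) (Cmult a2 b0)) (Cmult b1 b2)))
                  (Cplus (Cplus (Cmult (Cmult t0 a0) b0) (Cmult (Cmult t1 a1) b1)) (Cmult (Cmult t2 a2) b2))).
  { match goal with |- ?l = ?r => change (@eq C l r) end. field. repeat split; auto. }
  change Cadd with Cplus in HF. change Cmul with Cmult in HF. rewrite HF.
  match goal with |- ?l = ?r => change (@eq C l r) end. ring.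
Qed.

Lemma h_sym tau x y : h tau x y = h tau y x.
Proof.
  unfold h. change Cmul with Cmult.
  rewrite (th_same tau (Cadd eta (Cadd y (Cscale (-1) x))) (Cadd eta (Cadd (Cscale (-1) x) y))) by peq.
  rewrite (th_same tau (Cadd eta (Cadd y x)) (Cadd eta (Cadd x y))) by peq.
  rewrite (th_same tau (Cadd eta (Cadd (Cscale (-1) y) (Cscale (-1) x))) (Cadd eta (Cadd (Cscale (-1) x) (Cscale (-1) y)))) by peq.
  rewrite (th_same tau (Cadd eta (Cadd (Cscale (-1) y) x)) (Cadd eta (Cadd x (Cscale (-1) y)))) by peq.
  match goal with |- ?l = ?r => change (@eq C l r) end. ring.
Qed.

Lemma g_sym tau x y : g tau x y = g tau y x.
Proof.
  unfold g. rewrite h_sym. f_equal. change Cmul with Cmult.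
  match goal with |- ?l = ?r => change (@eq C l r) end. ring.
Qed.

Theorem mainTheorem5 (tau : CC) (Htau : 0 < Cim tau) :
  (forall x y : CC,
     h tau x y <> C0 ->
     h tau (Cadd x eta) y <> C0 ->
     h tau (Cadd x (Cscale 2 eta)) y <> C0 ->
     Cadd (Cadd (g tau x y) (g tau (Cadd x eta) y))
          (g tau (Cadd x (Cscale 2 eta)) y) = C0) /\
  (forall x y : CC,
     h tau x y <> C0 ->
     h tau x (Cadd y eta) <> C0 ->
     h tau x (Cadd y (Cscale 2 eta)) <> C0 ->
     Cadd (Cadd (g tau x y) (g tau x (Cadd y eta)))
          (g tau x (Cadd y (Cscale 2 eta))) = C0).
Proof.
  split.
  - apply part1; auto.
  - intros x y H1 H2 H3. rewrite !(g_sym tau x). rewrite !(h_sym tau x) in *.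
    apply part1; auto.
Qed.
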